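(* Let $n\ge2$, let $D=\{(y,z)\in\mathbb R^2_{>0}:\tfrac{z^2(n+1)}{z^2+n}\le y<1\}$, and let $(x,y,z)$ be the solution on its maximal interval $[0,T_{\max})$ of \[\dot x=nx^2+z^2,\quad \dot y=(n+1)z^2,\quad \dot z=\tfrac{n+1}{n}z\big((n-1)x+y\big),\] with initial condition $(1,y_0,z_0)$ where $(y_0,z_0)\in D$. Then $y,z<x$ on $[0,T_{\max})$ and there exists a constant $C>0$ such that \[\frac{1}{C(T_{\max}-t)}<x(t)<\frac{C}{T_{\max}-t}\qquad\text{for all }t\in[0,T_{\max}).\] *)

(* Defs.v *)
From Stdlib Require Import Reals.
From Coquelicot Require Import Coquelicot.
Open Scope R_scope.

Definition fx (n : nat) (x y z : R) : R := INR n * x ^ 2 + z ^ 2.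
Definition fy (n : nat) (x y z : R) : R := (INR n + 1) * z ^ 2.
Definition fz (n : nat) (x y z : R) : R :=
  (INR n + 1) / INR n * z * ((INR n - 1) * x + y).

Definition inD (n : nat) (y0 z0 : R) : Prop :=
  0 < y0 /\ 0 < z0 /\ z0 ^ 2 * (INR n + 1) / (z0 ^ 2 + INR n) <= y0 /\ y0 < 1.

Definition is_sol (n : nat) (T : Rbar) (x y z : R -> R) : Prop :=
  (forall t, 0 < t -> Rbar_lt t T ->
     is_derive x t (fx n (x t) (y t) (z t)) /\
     is_derive y t (fy n (x t) (y t) (z t)) /\
     is_derive z t (fz n (x t) (y t) (z t))) /\
  filterlim x (at_right 0) (locally (x 0)) /\
  filterlim y (at_right 0) (locally (y 0)) /\
  filterlim z (at_right 0) (locally (z 0)).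

Definition is_maximal_sol (n : nat) (T : Rbar) (x y z : R -> R) : Prop :=
  Rbar_lt 0 T /\ is_sol n T x y z /\
  forall (T' : Rbar) (x' y' z' : R -> R),
    is_sol n T' x' y' z' ->
    (forall t, 0 <= t -> Rbar_lt t T -> x' t = x t /\ y' t = y t /\ z' t = z t) ->
    Rbar_le T' T.

(* Main.v *)
Require Import Defs.
From Stdlib Require Import Reals.
From Coquelicot Require Import Coquelicot.
From Stdlib Require Import Lra Lia Psatz Classical_Prop.
Open Scope R_scope.

Lemma cont_eps f x : continuity_pt f x -> forall eps, 0 < eps ->
  exists d, 0 < d /\ forall y, Rabs (y - x) < d -> Rabs (f y - f x) < eps.
Proof.
  intros H eps He. destruct (H eps He) as [d [Hd H1]].
  exists d; split; auto. intros y Hy.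
  destruct (Req_dec y x) as [->|Hne].
  - rewrite Rminus_eq_0, Rabs_R0; auto.
  - apply H1. split. split; [exact I| auto]. exact Hy.
Qed.

Lemma eps_cont f x : (forall eps, 0 < eps ->
  exists d, 0 < d /\ forall y, Rabs (y - x) < d -> Rabs (f y - f x) < eps) -> continuity_pt f x.
Proof.
  intros H eps He. destruct (H eps He) as [d [Hd H1]].
  exists d; split; auto. intros y [_ Hy]. apply H1. exact Hy.
Qed.

Lemma right_eps f l : filterlim f (at_right 0) (locally l) ->
  forall eps, 0 < eps -> exists d, 0 < d /\ forall s, 0 < s < d -> Rabs (f s - l) < eps.
Proof.
  intros H eps He.
  assert (Hb := H (fun u => Rabs (u - l) < eps)).
  destruct Hb as [d Hd].
  - exists (mkposreal eps He). intros u Hu. exact Hu.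
  - exists d; split. apply cond_pos. intros s [H0 H1]. apply Hd; [|lra].
    unfold ball; simpl; unfold AbsRing_ball, abs, minus, plus, opp; simpl.
    rewrite Ropp_0, Rplus_0_r, Rabs_pos_eq; lra.
Qed.

Lemma deriv_cont f x l : is_derive f x l -> continuity_pt f x.
Proof.
  intros H. apply continuity_pt_filterlim. apply (ex_derive_continuous (V:=R_NormedModule) f x). exists l; exact H.
Qed.

Lemma mvt_bound f df s t lo hi : s < t ->
  (forall r, s < r < t -> is_derive f r (df r)) ->
  (forall r, s <= r <= t -> continuity_pt f r) ->
  (forall r, s < r < t -> lo <= df r <= hi) ->
  lo * (t - s) <= f t - f s <= hi * (t - s).
Proof.
  intros Hst Hd Hc Hb.
  assert (Hlh : lo <= hi) by (destruct (Hb ((s+t)/2)); lra).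
  destruct (MVT_gen f s t (fun r => Rmax lo (Rmin hi (df r)))) as [c [Hc1 Hc2]].
  - intros r Hr. rewrite Rmin_left in Hr by lra. rewrite Rmax_right in Hr by lra.
    destruct (Hb r Hr). rewrite Rmin_right by lra. rewrite Rmax_right by lra. auto.
  - intros r Hr. rewrite Rmin_left in Hr by lra. rewrite Rmax_right in Hr by lra. auto.
  - rewrite Hc2.
    assert (lo <= Rmax lo (Rmin hi (df c)) <= hi).
    { split. apply Rmax_l. apply Rmax_lub; auto. apply Rmin_l. }
    split; apply Rmult_le_compat_r; lra.
Qed.

Lemma deriv_pos_left f x d : is_derive f x d -> 0 < d ->
  exists eta, 0 < eta /\ forall s, x - eta < s < x -> f s < f x.
Proof.
  intros H Hd. apply is_derive_Reals in H.
  destruct (H (d/2) ltac:(lra)) as [eta Heta].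
  exists eta; split. apply cond_pos. intros s Hs.
  assert (Hh : s - x <> 0) by lra.
  assert (Ha : Rabs (s - x) < eta) by (rewrite Rabs_left by lra; lra).
  specialize (Heta (s - x) Hh Ha).
  replace (x + (s - x)) with s in Heta by ring.
  apply Rabs_def2 in Heta. destruct Heta as [H1 H2].
  assert (Hq : (f s - f x) / (s - x) > 0) by lra.
  assert (Hneg : s - x < 0) by lra.
  destruct (Rlt_or_le (f s) (f x)) as [|Hge]; auto.
  exfalso. assert ((f s - f x) / (s - x) <= 0).
  { unfold Rdiv. assert (/ (s - x) < 0) by (apply Rinv_lt_0_compat; lra). nra. }
  lra.
Qed.

Definition pos3 (a b c : R -> R) s := 0 < a s /\ 0 < b s /\ 0 < c s.

Lemma cont_neg_near f x : continuity_pt f x -> f x < 0 ->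
  exists d, 0 < d /\ forall y, Rabs (y - x) < d -> f y < 0.
Proof.
  intros H Hx. destruct (cont_eps f x H (- f x) ltac:(lra)) as [d [Hd H1]].
  exists d; split; auto. intros y Hy. specialize (H1 y Hy).
  apply Rabs_def2 in H1. lra.
Qed.

Lemma cont_pos_near f x : continuity_pt f x -> 0 < f x ->
  exists d, 0 < d /\ forall y, Rabs (y - x) < d -> 0 < f y.
Proof.
  intros H Hx. destruct (cont_eps f x H (f x) ltac:(lra)) as [d [Hd H1]].
  exists d; split; auto. intros y Hy. specialize (H1 y Hy).
  apply Rabs_def2 in H1. lra.
Qed.

Lemma first_zero (a b c : R -> R) (t1 : R) :
  0 < t1 ->
  (forall t, 0 < t <= t1 -> continuity_pt a t /\ continuity_pt b t /\ continuity_pt c t) ->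
  (exists d, 0 < d /\ forall s, 0 <= s < d -> pos3 a b c s) ->
  ~ pos3 a b c t1 ->
  exists ts, 0 < ts <= t1 /\ (forall s, 0 <= s < ts -> pos3 a b c s) /\
    0 <= a ts /\ 0 <= b ts /\ 0 <= c ts /\ (a ts = 0 \/ b ts = 0 \/ c ts = 0).
Proof.
  intros Ht1 Hc [d [Hd Hpd]] Hn.
  set (E := fun s => 0 <= s <= t1 /\ forall r, 0 <= r <= s -> pos3 a b c r).
  assert (Hb : bound E) by (exists t1; intros s [Hs _]; lra).
  assert (He : exists s, E s).
  { exists 0. split. lra. intros r Hr. apply Hpd. lra. }
  destruct (completeness E Hb He) as [ts [Hub Hlub]].
  assert (Ht1d : d <= t1).
  { destruct (Rle_or_lt d t1); auto. exfalso; apply Hn, Hpd; lra. }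
  assert (Hts0 : d / 2 <= ts).
  { apply Hub. split. lra. intros r Hr. apply Hpd. lra. }
  assert (Htst1 : ts <= t1).
  { apply Hlub. intros s [Hs _]; lra. }
  assert (Hbelow : forall s, 0 <= s < ts -> pos3 a b c s).
  { intros s Hs. destruct (Classical_Prop.classic (pos3 a b c s)) as [|Hns]; auto.
    exfalso. assert (ts <= s).
    { apply Hlub. intros u [Hu1 Hu2]. destruct (Rle_or_lt u s) as [|Hlt]; auto.
      exfalso. apply Hns. apply Hu2. lra. }
    lra. }
  destruct (Hc ts ltac:(lra)) as [Ca [Cb Cc]].
  assert (Hnn : forall f, continuity_pt f ts -> (forall s, 0 <= s < ts -> 0 < f s) -> 0 <= f ts).
  { intros f Cf Hf. destruct (Rle_or_lt 0 (f ts)) as [|Hlt]; auto.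
    destruct (cont_neg_near f ts Cf Hlt) as [e [He0 He1]].
    set (r := Rmax (ts - e/2) (ts/2)).
    assert (Hr : 0 <= r < ts).
    { unfold r. split. apply Rle_trans with (ts/2). lra. apply Rmax_r.
      apply Rmax_lub_lt; lra. }
    assert (Hr2 : Rabs (r - ts) < e).
    { rewrite Rabs_left by lra. unfold r.
      assert (ts - e/2 <= Rmax (ts - e / 2) (ts / 2)) by apply Rmax_l. lra. }
    specialize (He1 r Hr2). specialize (Hf r Hr). lra. }
  assert (Ha0 : 0 <= a ts) by (apply Hnn; auto; intros s Hs; apply Hbelow; auto).
  assert (Hb0 : 0 <= b ts) by (apply Hnn; auto; intros s Hs; apply Hbelow; auto).
  assert (Hc0 : 0 <= c ts) by (apply Hnn; auto; intros s Hs; apply Hbelow; auto).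
  exists ts. split. lra. split. auto. split. auto. split. auto. split. auto.
  destruct (Classical_Prop.classic (a ts = 0 \/ b ts = 0 \/ c ts = 0)) as [|Hno]; auto.
  exfalso.
  assert (Hp : pos3 a b c ts).
  { unfold pos3. repeat split.
    - destruct Ha0; auto. exfalso; apply Hno; auto.
    - destruct Hb0; auto. exfalso; apply Hno; auto.
    - destruct Hc0; auto. exfalso; apply Hno; auto. }
  destruct (Req_dec ts t1) as [Heq|Hneq].
  { apply Hn. rewrite <- Heq. exact Hp. }
  destruct Hp as [Pa [Pb Pc]].
  destruct (cont_pos_near a ts Ca Pa) as [ea [Ea0 Ea1]].
  destruct (cont_pos_near b ts Cb Pb) as [eb [Eb0 Eb1]].
  destruct (cont_pos_near c ts Cc Pc) as [ec [Ec0 Ec1]].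
  set (e := Rmin ea (Rmin eb ec)).
  assert (He0 : 0 < e) by (unfold e; repeat apply Rmin_pos; auto).
  assert (Hea : e <= ea) by apply Rmin_l.
  assert (Heb : e <= eb) by (unfold e; eapply Rle_trans; [apply Rmin_r|apply Rmin_l]).
  assert (Hec : e <= ec) by (unfold e; eapply Rle_trans; [apply Rmin_r|apply Rmin_r]).
  set (s' := Rmin (ts + e/2) t1).
  assert (Hs'1 : ts < s').
  { unfold s'. apply Rmin_glb_lt; lra. }
  assert (Hs'2 : s' <= ts + e/2) by apply Rmin_l.
  assert (Hs'3 : s' <= t1) by apply Rmin_r.
  assert (E s').
  { split. lra. intros r Hr. destruct (Rlt_or_le r ts) as [Hrl|Hrg].
    - apply Hbelow. lra.
    - assert (Rabs (r - ts) < e) by (rewrite Rabs_pos_eq by lra; lra).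
      unfold pos3. repeat split; [apply Ea1|apply Eb1|apply Ec1]; lra. }
  specialize (Hub s' H). lra.
Qed.

Definition clip (a b t : R) := Rmax a (Rmin b t).

Lemma clip_lip a b u t : a <= b -> Rabs (clip a b u - clip a b t) <= Rabs (u - t).
Proof.
  intros Hab. unfold clip, Rmax, Rmin.
  repeat (destruct Rle_dec); unfold Rabs; repeat (destruct Rcase_abs); lra.
Qed.

Lemma clip_in a b t : a <= b -> a <= clip a b t <= b.
Proof. intros Hab. unfold clip, Rmax, Rmin. repeat (destruct Rle_dec); lra. Qed.

Lemma clip_id a b t : a <= t <= b -> clip a b t = t.
Proof. intros H. unfold clip, Rmax, Rmin. repeat (destruct Rle_dec); lra. Qed.

Section Picard.
Variable F : nat -> R -> R -> R -> R.
Variables K L a b : R.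
Variable p : nat -> R.
Hypothesis HK0 : 0 <= K.
Hypothesis HL0 : 0 <= L.
Hypothesis Hab : a < b.
Hypothesis Hsmall : 3 * L * (b - a) <= / 2.
Hypothesis HK : forall i u v w, Rabs (F i u v w) <= K.
Hypothesis HL : forall i u v w u' v' w',
  Rabs (F i u v w - F i u' v' w') <= L * (Rabs (u - u') + Rabs (v - v') + Rabs (w - w')).

Definition G (phi : nat -> R -> R) i s := F i (phi 0%nat s) (phi 1%nat s) (phi 2%nat s).

Definition Op (phi : nat -> R -> R) : nat -> R -> R :=
  fun i t => p i + RInt (G phi i) a (clip a b t).

Definition allcont (phi : nat -> R -> R) := forall j t, continuity_pt (phi j) t.

Lemma G_cont phi : allcont phi -> forall i s, continuity_pt (G phi i) s.
Proof.
  intros Hc i s. apply eps_cont. intros eps He.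
  set (e' := eps / (3 * (L + 1))).
  assert (He' : 0 < e') by (unfold e'; apply Rdiv_lt_0_compat; lra).
  destruct (cont_eps _ _ (Hc 0%nat s) e' He') as [d0 [Hd0 H0]].
  destruct (cont_eps _ _ (Hc 1%nat s) e' He') as [d1 [Hd1 H1]].
  destruct (cont_eps _ _ (Hc 2%nat s) e' He') as [d2 [Hd2 H2]].
  exists (Rmin d0 (Rmin d1 d2)). split. repeat apply Rmin_pos; auto.
  intros y Hy.
  assert (Hy0 : Rabs (y - s) < d0) by (eapply Rlt_le_trans; [exact Hy|apply Rmin_l]).
  assert (Hy1 : Rabs (y - s) < d1) by (eapply Rlt_le_trans; [exact Hy|eapply Rle_trans; [apply Rmin_r|apply Rmin_l]]).
  assert (Hy2 : Rabs (y - s) < d2) by (eapply Rlt_le_trans; [exact Hy|eapply Rle_trans; [apply Rmin_r|apply Rmin_r]]).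
  specialize (H0 y Hy0). specialize (H1 y Hy1). specialize (H2 y Hy2).
  unfold G. eapply Rle_lt_trans. apply HL.
  assert (e' * (3 * (L + 1)) = eps) by (unfold e'; field; lra).
  nra.
Qed.

Lemma G_continuous phi : allcont phi -> forall i s, continuous (G phi i) s.
Proof. intros Hc i s. apply continuity_pt_filterlim. apply G_cont; auto. Qed.

Lemma G_exRInt phi : allcont phi -> forall i u v, ex_RInt (G phi i) u v.
Proof. intros Hc i u v. apply (ex_RInt_continuous (V:=R_CompleteNormedModule)). intros z _. apply G_continuous; auto. Qed.

Lemma RInt_deriv phi : allcont phi -> forall i u, is_derive (fun v => RInt (G phi i) a v) u (G phi i u).
Proof.
  intros Hc i u. apply (is_derive_RInt (V:=R_NormedModule) (G phi i) (fun v => RInt (G phi i) a v) a u).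
  - exists (mkposreal 1 Rlt_0_1). intros v _. apply (RInt_correct (V:=R_CompleteNormedModule)). apply G_exRInt; auto.
  - apply G_continuous; auto.
Qed.

Lemma Op_cont phi : allcont phi -> allcont (Op phi).
Proof.
  intros Hc i t. unfold Op.
  apply continuity_pt_plus. apply continuity_pt_const. intros ? ?; reflexivity.
  assert (HI : forall u, continuity_pt (fun v => RInt (G phi i) a v) u).
  { intros u. eapply deriv_cont. apply RInt_deriv; auto. }
  apply eps_cont. intros eps He.
  destruct (cont_eps _ _ (HI (clip a b t)) eps He) as [d [Hd H1]].
  exists d; split; auto. intros y Hy. apply H1.
  eapply Rle_lt_trans. apply clip_lip; lra. exact Hy.
Qed.

Lemma Op_contr phi psi D : allcont phi -> allcont psi ->
  (forall j t, Rabs (phi j t - psi j t) <= D) ->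
  forall i t, Rabs (Op phi i t - Op psi i t) <= D / 2.
Proof.
  intros Hc1 Hc2 HD i t. unfold Op.
  assert (HD0 : 0 <= D) by (eapply Rle_trans; [apply Rabs_pos|apply (HD 0%nat 0)]).
  set (c := clip a b t).
  assert (Hc : a <= c <= b) by (apply clip_in; lra).
  replace (p i + RInt (G phi i) a c - (p i + RInt (G psi i) a c))
    with (RInt (fun s => G phi i s - G psi i s) a c).
  2:{ rewrite (RInt_minus (G phi i) (G psi i)). unfold minus, plus, opp; simpl. ring.
      apply G_exRInt; auto. apply G_exRInt; auto. }
  eapply Rle_trans. apply (abs_RInt_le_const _ _ _ (L * (3 * D))). lra.
  apply (ex_RInt_minus (V:=R_NormedModule) (G phi i) (G psi i)); apply G_exRInt; auto.
  intros s _. unfold G. eapply Rle_trans. apply HL.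
  apply Rmult_le_compat_l; auto.
  generalize (HD 0%nat s) (HD 1%nat s) (HD 2%nat s); lra.
  apply Rle_trans with ((b - a) * (L * (3 * D))).
  apply Rmult_le_compat_r. apply Rmult_le_pos; lra. lra.
  replace ((b - a) * (L * (3 * D))) with ((3 * L * (b - a)) * D) by ring.
  replace (D / 2) with (/2 * D) by field.
  apply Rmult_le_compat_r; lra.
Qed.

Fixpoint it (k : nat) : nat -> R -> R :=
  match k with O => fun i _ => p i | S k => Op (it k) end.

Lemma it_cont k : allcont (it k).
Proof.
  induction k; simpl.
  - intros j t. apply continuity_pt_const. intros ? ?; reflexivity.
  - apply Op_cont; auto.
Qed.

Definition KB := K * (b - a).

Lemma it_step k : forall i t, Rabs (it (S k) i t - it k i t) <= KB * (/2) ^ k.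
Proof.
  induction k; intros i t.
  - simpl. unfold Op. rewrite Rmult_1_r.
    set (II := RInt (G (fun i0 _ => p i0) i) a (clip a b t)).
    replace (p i + II - p i) with (II:R) by (unfold Rminus; rewrite (Rplus_comm (p i)), Rplus_assoc, Rplus_opp_r, Rplus_0_r; reflexivity). unfold II.
    assert (Hc : a <= clip a b t <= b) by (apply clip_in; lra).
    eapply Rle_trans. apply abs_RInt_le_const. lra.
    apply G_exRInt. apply (it_cont 0).
    intros s _. apply HK.
    unfold KB. rewrite Rmult_comm. apply Rmult_le_compat_l; lra.
  - change (it (S (S k)) i t) with (Op (it (S k)) i t).
    change (it (S k) i t) with (Op (it k) i t).
    replace (KB * (/2) ^ S k) with ((KB * (/2)^k) / 2) by (simpl; field).
    apply Op_contr. apply it_cont. apply it_cont. auto.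
Qed.

Lemma KB_pos : 0 <= KB.
Proof. unfold KB. apply Rmult_le_pos; lra. Qed.

Lemma it_cauchy k j : forall i t,
  Rabs (it (k + j) i t - it k i t) <= 2 * KB * ((/2) ^ k - (/2) ^ (k + j)).
Proof.
  induction j; intros i t.
  - rewrite Nat.add_0_r. rewrite Rminus_eq_0, Rabs_R0. lra.
  - replace (k + S j)%nat with (S (k + j)) by lia.
    eapply Rle_trans with (Rabs (it (S (k+j)) i t - it (k+j) i t) + Rabs (it (k+j) i t - it k i t)).
    { replace (it (S (k + j)) i t - it k i t) with
        ((it (S (k+j)) i t - it (k+j) i t) + (it (k+j) i t - it k i t)) by ring.
      apply Rabs_triang. }
    generalize (it_step (k+j) i t) (IHj i t). simpl (_ ^ S _). lra.
Qed.

Lemma half_pow_pos k : 0 < (/2) ^ k.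
Proof. apply pow_lt. lra. Qed.

Lemma half_pow_small e : 0 < e -> exists N, forall k, (N <= k)%nat -> 2 * KB * (/2) ^ k < e.
Proof.
  intros He.
  destruct (pow_lt_1_zero (/2) ltac:(rewrite Rabs_pos_eq; lra) (e / (2 * KB + 1))) as [N HN].
  { apply Rdiv_lt_0_compat; generalize KB_pos; lra. }
  exists N. intros k Hk. specialize (HN k Hk). rewrite Rabs_pos_eq in HN by (left; apply half_pow_pos).
  generalize KB_pos (half_pow_pos k); intros H1 H2.
  assert (HH : (/ 2) ^ k * (2 * KB + 1) < e).
  { apply Rmult_lt_compat_r with (r := 2 * KB + 1) in HN. 2: lra.
    unfold Rdiv in HN. rewrite Rmult_assoc, Rinv_l, Rmult_1_r in HN by lra. exact HN. }
  nra.
Qed.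

Definition phi i t : R := real (Lim_seq (fun k => it k i t)).

Lemma phi_lim i t : is_lim_seq (fun k => it k i t) (phi i t).
Proof.
  apply Lim_seq_correct'. apply ex_lim_seq_cauchy_corr.
  intros eps. destruct (half_pow_small (eps/2) ltac:(generalize (cond_pos eps); lra)) as [N HN].
  exists N. intros m m' Hm Hm'.
  assert (Hg : forall m, (N <= m)%nat -> Rabs (it m i t - it N i t) <= 2 * KB * (/2) ^ N).
  { intros m0 Hm0. replace m0 with (N + (m0 - N))%nat by lia.
    eapply Rle_trans. apply it_cauchy. generalize (half_pow_pos (N + (m0 - N))) KB_pos. nra. }
  specialize (HN N (le_n N)).
  generalize (Hg m Hm) (Hg m' Hm'). intros A1 A2.
  replace (it m i t - it m' i t) with ((it m i t - it N i t) - (it m' i t - it N i t)) by ring.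
  eapply Rle_lt_trans. apply Rabs_triang. rewrite Rabs_Ropp.
  lra.
Qed.

Lemma phi_bound k i t : Rabs (phi i t - it k i t) <= 2 * KB * (/2) ^ k.
Proof.
  set (B := 2 * KB * (/2) ^ k).
  assert (Hev : forall m, (k <= m)%nat -> Rabs (it m i t - it k i t) <= B).
  { intros m Hm. replace m with (k + (m - k))%nat by lia.
    eapply Rle_trans. apply it_cauchy. unfold B. generalize (half_pow_pos (k + (m - k))) KB_pos. nra. }
  assert (H1 : Rbar_le (phi i t) (it k i t + B)).
  { apply (is_lim_seq_le_loc (fun m => it m i t) (fun _ => it k i t + B)).
    - exists k. intros m Hm. generalize (Hev m Hm). intros HH. apply Rabs_le_between in HH. lra.
    - apply phi_lim.
    - apply is_lim_seq_const. }
  assert (H2 : Rbar_le (it k i t - B) (phi i t)).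
  { apply (is_lim_seq_le_loc (fun _ => it k i t - B) (fun m => it m i t)).
    - exists k. intros m Hm. generalize (Hev m Hm). intros HH. apply Rabs_le_between in HH. lra.
    - apply is_lim_seq_const.
    - apply phi_lim. }
  simpl in H1, H2. apply Rabs_le. lra.
Qed.

Lemma phi_cont : allcont phi.
Proof.
  intros j t. apply eps_cont. intros eps He.
  destruct (half_pow_small (eps/3) ltac:(lra)) as [N HN].
  specialize (HN N (le_n N)).
  destruct (cont_eps _ _ (it_cont N j t) (eps/3) ltac:(lra)) as [d [Hd H1]].
  exists d; split; auto. intros y Hy. specialize (H1 y Hy).
  generalize (phi_bound N j y) (phi_bound N j t). intros A1 A2.
  replace (phi j y - phi j t) with ((phi j y - it N j y) + (it N j y - it N j t) - (phi j t - it N j t)) by ring.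
  assert (Rabs ((phi j y - it N j y) + (it N j y - it N j t) - (phi j t - it N j t))
     <= Rabs (phi j y - it N j y) + Rabs (it N j y - it N j t) + Rabs (phi j t - it N j t)).
  { eapply Rle_trans. apply Rabs_triang. rewrite Rabs_Ropp. 
    generalize (Rabs_triang (phi j y - it N j y) (it N j y - it N j t)). lra. }
  lra.
Qed.

Lemma phi_fix i t : Op phi i t = phi i t.
Proof.
  apply Rminus_diag_uniq. apply Rabs_eq_0.
  apply Rle_antisym; [|apply Rabs_pos].
  apply Rnot_lt_le. intros Hpos.
  destruct (half_pow_small _ Hpos) as [N HN]. specialize (HN N (le_n N)).
  assert (H1 : Rabs (Op phi i t - Op (it N) i t) <= (2 * KB * (/2)^N) / 2).
  { apply Op_contr. apply phi_cont. apply it_cont. intros j s. apply phi_bound. }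
  assert (H2 := phi_bound (S N) i t). simpl (_ ^ S N) in H2.
  change (it (S N) i t) with (Op (it N) i t) in H2.
  assert (H3 : Rabs (Op phi i t - phi i t) <= Rabs (Op phi i t - Op (it N) i t) + Rabs (phi i t - Op (it N) i t)).
  { replace (Op phi i t - phi i t) with ((Op phi i t - Op (it N) i t) + - (phi i t - Op (it N) i t)) by ring.
    eapply Rle_trans. apply Rabs_triang. rewrite Rabs_Ropp. lra. }
  generalize (half_pow_pos N) KB_pos. nra.
Qed.

Lemma phi_init i : phi i a = p i.
Proof.
  rewrite <- phi_fix. unfold Op. rewrite clip_id by lra. rewrite RInt_point.
  unfold zero; simpl. ring.
Qed.

Lemma phi_deriv i t : a < t < b -> is_derive (phi i) t (G phi i t).
Proof.
  intros Ht.
  apply is_derive_ext_loc with (f := fun u => p i + RInt (G phi i) a u).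
  - apply locally_interval with (a := a) (b := b); simpl; try lra.
    intros y Hy1 Hy2. rewrite <- phi_fix. unfold Op. rewrite clip_id by lra. reflexivity.
  - assert (Hd := is_derive_plus (K:=R_AbsRing) (V:=R_NormedModule) (fun _ => p i)
       (fun u => RInt (G phi i) a u) t zero (G phi i t)
       (is_derive_const (K:=R_AbsRing) (V:=R_NormedModule) (p i) t) (RInt_deriv phi phi_cont i t)).
    replace (G phi i t) with (plus (@zero R_NormedModule) (G phi i t)).
    exact Hd. unfold plus, zero; simpl. ring.
Qed.

End Picard.

Lemma picard (F : nat -> R -> R -> R -> R) (K L a b : R) (p : nat -> R) :
  0 <= K -> 0 <= L -> a < b -> 3 * L * (b - a) <= / 2 ->
  (forall i u v w, Rabs (F i u v w) <= K) ->
  (forall i u v w u' v' w',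
    Rabs (F i u v w - F i u' v' w') <= L * (Rabs (u - u') + Rabs (v - v') + Rabs (w - w'))) ->
  exists (f : nat -> R -> R), (forall i, f i a = p i) /\ (forall i t, continuity_pt (f i) t) /\ (forall i t, a < t < b -> is_derive (f i) t (F i (f 0%nat t) (f 1%nat t) (f 2%nat t))).
Proof.
  intros. exists (phi F a b p). split; [|split].
  - intros i. apply (phi_init F K L a b p); assumption.
  - apply (phi_cont F K L a b p); assumption.
  - intros i t Ht. apply (phi_deriv F K L a b p); assumption.
Qed.

Lemma d_mult f g x df dg : is_derive f x df -> is_derive g x dg ->
  is_derive (fun t => f t * g t) x (df * g x + f x * dg).
Proof.
  intros H1 H2. apply is_derive_Reals. apply is_derive_Reals in H1. apply is_derive_Reals in H2.
  replace (df * g x + f x * dg) with (df * g x + f x * dg) by ring.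
  apply (derivable_pt_lim_mult f g x df dg H1 H2).
Qed.

Lemma d_plus f g x df dg : is_derive f x df -> is_derive g x dg ->
  is_derive (fun t => f t + g t) x (df + dg).
Proof.
  intros H1 H2. apply is_derive_Reals. apply is_derive_Reals in H1. apply is_derive_Reals in H2.
  apply (derivable_pt_lim_plus f g x df dg H1 H2).
Qed.

Lemma d_minus f g x df dg : is_derive f x df -> is_derive g x dg ->
  is_derive (fun t => f t - g t) x (df - dg).
Proof.
  intros H1 H2. apply is_derive_Reals. apply is_derive_Reals in H1. apply is_derive_Reals in H2.
  apply (derivable_pt_lim_minus f g x df dg H1 H2).
Qed.

Lemma d_inv f x df : is_derive f x df -> f x <> 0 ->
  is_derive (fun t => / f t) x (- df / (f x) ^ 2).
Proof. apply is_derive_inv. Qed.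

Lemma d_exp k x : is_derive (fun t => exp (k * t)) x (k * exp (k * x)).
Proof. auto_derive. auto. ring. Qed.

Lemma c_plus f g x : continuity_pt f x -> continuity_pt g x -> continuity_pt (fun t => f t + g t) x.
Proof. apply continuity_pt_plus. Qed.
Lemma c_mult f g x : continuity_pt f x -> continuity_pt g x -> continuity_pt (fun t => f t * g t) x.
Proof. apply continuity_pt_mult. Qed.
Lemma c_minus f g x : continuity_pt f x -> continuity_pt g x -> continuity_pt (fun t => f t - g t) x.
Proof. apply continuity_pt_minus. Qed.

Lemma mvt_up f df s t hi : s < t ->
  (forall r, s < r < t -> is_derive f r (df r)) ->
  (forall r, s <= r <= t -> continuity_pt f r) ->
  (forall r, s < r < t -> df r <= hi) ->
  f t - f s <= hi * (t - s).
Proof.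
  intros Hst Hd Hc Hb.
  destruct (MVT_gen f s t (fun r => Rmin hi (df r))) as [c [Hc1 Hc2]].
  - intros r Hr. rewrite Rmin_left in Hr by lra. rewrite Rmax_right in Hr by lra.
    rewrite Rmin_right by (apply Hb; lra). auto.
  - intros r Hr. rewrite Rmin_left in Hr by lra. rewrite Rmax_right in Hr by lra. auto.
  - rewrite Hc2. apply Rmult_le_compat_r. lra. apply Rmin_l.
Qed.

Lemma sum_ineq D0 D1 D2 e0 e1 e2 L : 0 <= L ->
  Rabs e0 <= L * (Rabs D0 + Rabs D1 + Rabs D2) ->
  Rabs e1 <= L * (Rabs D0 + Rabs D1 + Rabs D2) ->
  Rabs e2 <= L * (Rabs D0 + Rabs D1 + Rabs D2) ->
  2 * (D0 * e0 + D1 * e1 + D2 * e2) <= 6 * L * (D0 * D0 + D1 * D1 + D2 * D2).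
Proof.
  intros HL H0 H1 H2.
  set (S1 := Rabs D0 + Rabs D1 + Rabs D2).
  assert (P : forall D e, Rabs e <= L * S1 -> D * e <= Rabs D * (L * S1)).
  { intros D e He. eapply Rle_trans. apply Rle_abs. rewrite Rabs_mult.
    apply Rmult_le_compat_l. apply Rabs_pos. auto. }
  assert (A0 := P D0 e0 H0). assert (A1 := P D1 e1 H1). assert (A2 := P D2 e2 H2).
  assert (Q : forall D, D * D = Rabs D * Rabs D).
  { intros D. rewrite <- Rabs_mult. rewrite Rabs_pos_eq. auto. nra. }
  rewrite (Q D0), (Q D1), (Q D2).
  generalize (Rabs_pos D0) (Rabs_pos D1) (Rabs_pos D2). intros B0 B1 B2.
  assert (S1 * S1 <= 3 * (Rabs D0 * Rabs D0 + Rabs D1 * Rabs D1 + Rabs D2 * Rabs D2)).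
  { unfold S1. generalize (Rle_0_sqr (Rabs D0 - Rabs D1)) (Rle_0_sqr (Rabs D1 - Rabs D2)) (Rle_0_sqr (Rabs D0 - Rabs D2)).
    unfold Rsqr. intros. nra. }
  assert (2 * (D0 * e0 + D1 * e1 + D2 * e2) <= 2 * L * (S1 * S1)).
  { unfold S1 in *. nra. }
  nra.
Qed.

Lemma uniq (F : nat -> R -> R -> R -> R) L a c (phi X : nat -> R -> R) :
  0 <= L ->
  (forall i u v w u' v' w',
    Rabs (F i u v w - F i u' v' w') <= L * (Rabs (u - u') + Rabs (v - v') + Rabs (w - w'))) ->
  a < c ->
  (forall i t, a <= t < c -> continuity_pt (phi i) t /\ continuity_pt (X i) t) ->
  (forall i t, a < t < c -> is_derive (phi i) t (F i (phi 0%nat t) (phi 1%nat t) (phi 2%nat t)) /\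
                             is_derive (X i) t (F i (X 0%nat t) (X 1%nat t) (X 2%nat t))) ->
  (forall i, phi i a = X i a) ->
  forall t, a <= t < c -> phi 0%nat t = X 0%nat t /\ phi 1%nat t = X 1%nat t /\ phi 2%nat t = X 2%nat t.
Proof.
  intros HL0 HL Hac Hc Hd H0 t1 Ht1.
  set (D := fun i t => phi i t - X i t).
  set (dD := fun i t => F i (phi 0%nat t) (phi 1%nat t) (phi 2%nat t) - F i (X 0%nat t) (X 1%nat t) (X 2%nat t)).
  set (S := fun t => D 0%nat t * D 0%nat t + D 1%nat t * D 1%nat t + D 2%nat t * D 2%nat t).
  set (k := - (6 * L)).
  set (E := fun t => S t * exp (k * t)).
  assert (HDd : forall i t, a < t < c -> is_derive (D i) t (dD i t)).
  { intros i t Ht. destruct (Hd i t Ht). apply d_minus; auto. }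
  assert (HDc : forall i t, a <= t < c -> continuity_pt (D i) t).
  { intros i t Ht. destruct (Hc i t Ht). apply (continuity_pt_minus (phi i) (X i)); auto. }
  assert (HSd : forall t, a < t < c -> is_derive S t
     (2 * (D 0%nat t * dD 0%nat t + D 1%nat t * dD 1%nat t + D 2%nat t * dD 2%nat t))).
  { intros t Ht. 
    assert (HH := d_plus _ _ t _ _ (d_plus _ _ t _ _ (d_mult _ _ t _ _ (HDd 0%nat t Ht) (HDd 0%nat t Ht))
        (d_mult _ _ t _ _ (HDd 1%nat t Ht) (HDd 1%nat t Ht))) (d_mult _ _ t _ _ (HDd 2%nat t Ht) (HDd 2%nat t Ht))).
    match type of HH with is_derive _ _ ?v => replace (2 * _) with v by ring end.
    exact HH. }
  assert (HEd : forall t, a < t < c -> is_derive E t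
     (2 * (D 0%nat t * dD 0%nat t + D 1%nat t * dD 1%nat t + D 2%nat t * dD 2%nat t) * exp (k * t)
      + S t * (k * exp (k * t)))).
  { intros t Ht. apply (d_mult S (fun u => exp (k * u))). apply HSd; auto. apply d_exp. }
  assert (HEneg : forall t, a < t < c ->
     2 * (D 0%nat t * dD 0%nat t + D 1%nat t * dD 1%nat t + D 2%nat t * dD 2%nat t) * exp (k * t)
      + S t * (k * exp (k * t)) <= 0).
  { intros t Ht.
    assert (Hs : 2 * (D 0%nat t * dD 0%nat t + D 1%nat t * dD 1%nat t + D 2%nat t * dD 2%nat t)
       <= 6 * L * S t).
    { unfold S. apply sum_ineq; auto; unfold dD, D; apply HL. }
    generalize (exp_pos (k * t)). unfold k. nra. }
  assert (HSc : forall t, a <= t < c -> continuity_pt S t).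
  { intros t Ht. unfold S.
    apply c_plus; [apply c_plus|]; apply c_mult; apply HDc; auto. }
  assert (HEc : forall t, a <= t < c -> continuity_pt E t).
  { intros t Ht. unfold E. apply (continuity_pt_mult S (fun t => exp (k * t))). auto.
    eapply deriv_cont. apply d_exp. }
  assert (HE1 : E t1 <= 0).
  { destruct (Req_dec t1 a) as [->|Hne].
    - unfold E, S, D. rewrite !H0. lra.
    - assert (HH : E t1 - E a <= 0 * (t1 - a)).
      { apply mvt_up with (df := fun t => 2 * (D 0%nat t * dD 0%nat t + D 1%nat t * dD 1%nat t + D 2%nat t * dD 2%nat t) * exp (k * t)
      + S t * (k * exp (k * t))). lra.
        intros r Hr. apply HEd. lra. intros r Hr. apply HEc. lra.
        intros r Hr. apply HEneg. lra. }
      assert (E a = 0) by (unfold E, S, D; rewrite !H0; ring). lra. }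
  unfold E in HE1. assert (Hex := exp_pos (k * t1)).
  assert (HS1 : S t1 <= 0) by nra.
  unfold S, D in HS1.
  set (d0 := phi 0%nat t1 - X 0%nat t1) in *.
  set (d1 := phi 1%nat t1 - X 1%nat t1) in *.
  set (d2 := phi 2%nat t1 - X 2%nat t1) in *.
  assert (Q0 := Rle_0_sqr d0). assert (Q1 := Rle_0_sqr d1). assert (Q2 := Rle_0_sqr d2).
  unfold Rsqr in *.
  assert (Z0 : d0 = 0) by (apply Rsqr_0_uniq; unfold Rsqr; lra).
  assert (Z1 : d1 = 0) by (apply Rsqr_0_uniq; unfold Rsqr; lra).
  assert (Z2 : d2 = 0) by (apply Rsqr_0_uniq; unfold Rsqr; lra).
  unfold d0, d1, d2 in *.
  lra.
Qed.

Definition cl R0 u := clip (-R0) R0 u.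

Definition Fcl n R0 (i : nat) u v w :=
  match i with
  | 0%nat => fx n (cl R0 u) (cl R0 v) (cl R0 w)
  | 1%nat => fy n (cl R0 u) (cl R0 v) (cl R0 w)
  | _ => fz n (cl R0 u) (cl R0 v) (cl R0 w)
  end.

Lemma abs_mul_le A B c : Rabs B <= c -> Rabs (A * B) <= Rabs A * c.
Proof. intros H. rewrite Rabs_mult. apply Rmult_le_compat_l; auto. apply Rabs_pos. Qed.

Lemma INR_n_pos n : (1 <= n)%nat -> 1 <= INR n.
Proof. intros H. apply (le_INR 1 n) in H. simpl in H. lra. Qed.

Section Lip.
Variable n : nat.
Hypothesis Hn : (1 <= n)%nat.
Variable R0 : R.
Hypothesis HR0 : 0 <= R0.
Variables u v w u' v' w' : R.
Hypothesis Hu : Rabs u <= R0.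
Hypothesis Hv : Rabs v <= R0.
Hypothesis Hw : Rabs w <= R0.
Hypothesis Hu' : Rabs u' <= R0.
Hypothesis Hv' : Rabs v' <= R0.
Hypothesis Hw' : Rabs w' <= R0.

Let N := INR n.
Let HN : 1 <= N := INR_n_pos n Hn.

Lemma sum_le a1 a2 : Rabs a1 <= R0 -> Rabs a2 <= R0 -> Rabs (a1 + a2) <= 2 * R0.
Proof. intros. eapply Rle_trans. apply Rabs_triang. lra. Qed.

Lemma lip_fx : Rabs (fx n u v w - fx n u' v' w') <= 2 * (N + 1) * R0 * (Rabs (u - u') + Rabs (v - v') + Rabs (w - w')).
Proof.
  replace (fx n u v w - fx n u' v' w') with (N * ((u - u') * (u + u')) + (w - w') * (w + w'))
    by (unfold fx, N; ring).
  eapply Rle_trans. apply Rabs_triang. rewrite Rabs_mult, (Rabs_pos_eq N) by lra.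
  assert (A1 := abs_mul_le (u - u') (u + u') (2 * R0) (sum_le u u' Hu Hu')).
  assert (A2 := abs_mul_le (w - w') (w + w') (2 * R0) (sum_le w w' Hw Hw')).
  generalize (Rabs_pos (u - u')) (Rabs_pos (v - v')) (Rabs_pos (w - w')). intros P1 P2 P3.
  assert (A3 : N * Rabs ((u - u') * (u + u')) <= N * (Rabs (u - u') * (2 * R0))) by (apply Rmult_le_compat_l; lra).
  assert (A4 : 2 * R0 * (N * Rabs (u - u') + Rabs (w - w')) <= 2 * R0 * ((N + 1) * (Rabs (u - u') + Rabs (v - v') + Rabs (w - w')))).
  { apply Rmult_le_compat_l. lra. nra. }
  nra.
Qed.

Lemma lip_fy : Rabs (fy n u v w - fy n u' v' w') <= 2 * (N + 1) * R0 * (Rabs (u - u') + Rabs (v - v') + Rabs (w - w')).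
Proof.
  replace (fy n u v w - fy n u' v' w') with ((N + 1) * ((w - w') * (w + w')))
    by (unfold fy, N; ring).
  rewrite Rabs_mult, (Rabs_pos_eq (N + 1)) by lra.
  assert (A2 := abs_mul_le (w - w') (w + w') (2 * R0) (sum_le w w' Hw Hw')).
  generalize (Rabs_pos (u - u')) (Rabs_pos (v - v')) (Rabs_pos (w - w')). intros P1 P2 P3.
  apply Rle_trans with ((N + 1) * (Rabs (w - w') * (2 * R0))).
  apply Rmult_le_compat_l; lra.
  replace (2 * (N + 1) * R0 * (Rabs (u - u') + Rabs (v - v') + Rabs (w - w'))) with
    ((N + 1) * ((Rabs (u - u') + Rabs (v - v') + Rabs (w - w')) * (2 * R0))) by ring.
  apply Rmult_le_compat_l. lra. apply Rmult_le_compat_r; lra.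
Qed.

Lemma lip_fz : Rabs (fz n u v w - fz n u' v' w') <= 2 * (N + 1) * R0 * (Rabs (u - u') + Rabs (v - v') + Rabs (w - w')).
Proof.
  replace (fz n u v w - fz n u' v' w') with
    ((N + 1) / N * ((w - w') * ((N - 1) * u + v) + w' * ((N - 1) * (u - u') + (v - v'))))
    by (assert (HNz : N <> 0) by lra; unfold fz; fold N; field; exact HNz).
  rewrite Rabs_mult, (Rabs_pos_eq ((N + 1) / N)) by (left; apply Rdiv_lt_0_compat; lra).
  assert (B1 : Rabs ((N - 1) * u + v) <= N * R0).
  { eapply Rle_trans. apply Rabs_triang. rewrite Rabs_mult, (Rabs_pos_eq (N - 1)) by lra. nra. }
  assert (B2 : Rabs ((N - 1) * (u - u') + (v - v')) <= (N - 1) * Rabs (u - u') + Rabs (v - v')).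
  { eapply Rle_trans. apply Rabs_triang. rewrite Rabs_mult, (Rabs_pos_eq (N - 1)) by lra. lra. }
  assert (A : Rabs ((w - w') * ((N - 1) * u + v) + w' * ((N - 1) * (u - u') + (v - v')))
     <= Rabs (w - w') * (N * R0) + R0 * ((N - 1) * Rabs (u - u') + Rabs (v - v'))).
  { eapply Rle_trans. apply Rabs_triang. rewrite !Rabs_mult.
    generalize (Rabs_pos (w - w')) (Rabs_pos w') (Rabs_pos ((N - 1) * (u - u') + (v - v'))). intros. nra. }
  generalize (Rabs_pos (u - u')) (Rabs_pos (v - v')) (Rabs_pos (w - w')). intros P1 P2 P3.
  set (S := Rabs ((w - w') * ((N - 1) * u + v) + w' * ((N - 1) * (u - u') + (v - v')))) in *.
  assert (HS1 : R0 * ((N - 1) * Rabs (u - u') + Rabs (v - v')) <= R0 * (N * Rabs (u - u') + N * Rabs (v - v'))).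
  { apply Rmult_le_compat_l. lra. nra. }
  assert (HS : S <= N * R0 * (Rabs (u - u') + Rabs (v - v') + Rabs (w - w'))).
  { eapply Rle_trans. exact A. eapply Rle_trans. apply Rplus_le_compat_l. exact HS1. right; ring. }
  assert (HNN : (N + 1) / N * N = N + 1) by (field; lra).
  assert (0 < (N+1)/N) by (apply Rdiv_lt_0_compat; lra).
  apply Rle_trans with ((N + 1) / N * (N * R0 * (Rabs (u - u') + Rabs (v - v') + Rabs (w - w')))).
  apply Rmult_le_compat_l; lra.
  replace ((N + 1) / N * (N * R0 * (Rabs (u - u') + Rabs (v - v') + Rabs (w - w'))))
    with ((N + 1) / N * N * R0 * (Rabs (u - u') + Rabs (v - v') + Rabs (w - w'))) by ring.
  rewrite HNN.
  assert (0 <= (N + 1) * R0 * (Rabs (u - u') + Rabs (v - v') + Rabs (w - w'))) by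
    (apply Rmult_le_pos; [apply Rmult_le_pos|]; lra).
  lra.
Qed.

Lemma bnd_fx : Rabs (fx n u v w) <= (N + 1) * R0 * R0.
Proof.
  unfold fx. fold N. eapply Rle_trans. apply Rabs_triang.
  rewrite Rabs_mult, (Rabs_pos_eq N) by lra. rewrite <- !RPow_abs.
  generalize (Rabs_pos u) (Rabs_pos w). intros. simpl. rewrite !Rmult_1_r.
  assert (Rabs u * Rabs u <= R0 * R0) by (apply Rmult_le_compat; lra).
  assert (Rabs w * Rabs w <= R0 * R0) by (apply Rmult_le_compat; lra).
  assert (N * (Rabs u * Rabs u) <= N * (R0 * R0)) by (apply Rmult_le_compat_l; lra).
  lra.
Qed.

Lemma bnd_fy : Rabs (fy n u v w) <= (N + 1) * R0 * R0.
Proof.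
  unfold fy. fold N. rewrite Rabs_mult, (Rabs_pos_eq (N+1)) by lra. rewrite <- !RPow_abs.
  generalize (Rabs_pos u) (Rabs_pos w). intros. simpl. rewrite !Rmult_1_r.
  assert (Rabs w * Rabs w <= R0 * R0) by (apply Rmult_le_compat; lra).
  replace ((N + 1) * R0 * R0) with ((N + 1) * (R0 * R0)) by ring.
  apply Rmult_le_compat_l; lra.
Qed.

Lemma bnd_fz : Rabs (fz n u v w) <= (N + 1) * R0 * R0.
Proof.
  unfold fz. fold N.
  assert (B1 : Rabs ((N - 1) * u + v) <= N * R0).
  { eapply Rle_trans. apply Rabs_triang. rewrite Rabs_mult, (Rabs_pos_eq (N - 1)) by lra. nra. }
  rewrite !Rabs_mult. rewrite (Rabs_pos_eq ((N + 1) / N)) by (left; apply Rdiv_lt_0_compat; lra).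
  assert (HNN : (N + 1) / N * N = N + 1) by (field; lra).
  assert (0 < (N+1)/N) by (apply Rdiv_lt_0_compat; lra).
  generalize (Rabs_pos w) (Rabs_pos ((N - 1) * u + v)). intros.
  apply Rle_trans with ((N + 1) / N * (R0 * (N * R0))).
  rewrite Rmult_assoc. apply Rmult_le_compat_l. lra. apply Rmult_le_compat; auto.
  replace ((N + 1) / N * (R0 * (N * R0))) with ((N + 1) / N * N * R0 * R0) by ring.
  rewrite HNN. lra.
Qed.
End Lip.

Lemma cl_in R0 u : 0 <= R0 -> Rabs (cl R0 u) <= R0.
Proof. intros H. unfold cl. destruct (clip_in (-R0) R0 u) as [H1 H2]. lra. apply Rabs_le. lra. Qed.

Lemma cl_id R0 u : Rabs u <= R0 -> cl R0 u = u.
Proof. intros H. unfold cl. apply clip_id. apply Rabs_le_between in H. lra. Qed.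

Lemma cl_lip R0 u u' : 0 <= R0 -> Rabs (cl R0 u - cl R0 u') <= Rabs (u - u').
Proof. intros H. unfold cl. apply clip_lip. lra. Qed.

Lemma Fcl_bound n R0 : (1 <= n)%nat -> 0 <= R0 ->
  forall i u v w, Rabs (Fcl n R0 i u v w) <= (INR n + 1) * R0 * R0.
Proof.
  intros Hn HR i u v w. assert (A := cl_in R0 u HR). assert (B := cl_in R0 v HR). assert (C := cl_in R0 w HR).
  destruct i as [|[|i]]; simpl.
  apply bnd_fx; auto. apply bnd_fy; auto. apply bnd_fz; auto.
Qed.

Lemma Fcl_lip n R0 : (1 <= n)%nat -> 0 <= R0 ->
  forall i u v w u' v' w', Rabs (Fcl n R0 i u v w - Fcl n R0 i u' v' w') <=
    2 * (INR n + 1) * R0 * (Rabs (u - u') + Rabs (v - v') + Rabs (w - w')).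
Proof.
  intros Hn HR i u v w u' v' w'.
  assert (L0 : 0 <= 2 * (INR n + 1) * R0) by (generalize (pos_INR n); intros; apply Rmult_le_pos; lra).
  assert (K1 := cl_lip R0 u u' HR). assert (K2 := cl_lip R0 v v' HR). assert (K3 := cl_lip R0 w w' HR).
  assert (M : 2 * (INR n + 1) * R0 * (Rabs (cl R0 u - cl R0 u') + Rabs (cl R0 v - cl R0 v') + Rabs (cl R0 w - cl R0 w'))
     <= 2 * (INR n + 1) * R0 * (Rabs (u - u') + Rabs (v - v') + Rabs (w - w'))) by (apply Rmult_le_compat_l; lra).
  eapply Rle_trans; [|exact M].
  destruct i as [|[|i]]; simpl.
  apply lip_fx; auto; apply cl_in; auto.
  apply lip_fy; auto; apply cl_in; auto.
  apply lip_fz; auto; apply cl_in; auto.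
Qed.

Definition fi n (i : nat) u v w :=
  match i with 0%nat => fx n u v w | 1%nat => fy n u v w | _ => fz n u v w end.

Lemma Fcl_fi n R0 i u v w : Fcl n R0 i u v w = fi n i (cl R0 u) (cl R0 v) (cl R0 w).
Proof. destruct i as [|[|i]]; reflexivity. Qed.

Lemma extend n Tm M (x y z : R -> R) : (1 <= n)%nat -> 0 < Tm -> 0 <= M ->
  (forall t, 0 < t < Tm -> is_derive x t (fx n (x t) (y t) (z t)) /\
      is_derive y t (fy n (x t) (y t) (z t)) /\ is_derive z t (fz n (x t) (y t) (z t))) ->
  (forall t, Tm / 2 <= t < Tm -> Rabs (x t) <= M /\ Rabs (y t) <= M /\ Rabs (z t) <= M) ->
  exists h, 0 < h /\ exists x' y' z' : R -> R,
    (forall t, 0 < t < Tm + h -> is_derive x' t (fx n (x' t) (y' t) (z' t)) /\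
      is_derive y' t (fy n (x' t) (y' t) (z' t)) /\ is_derive z' t (fz n (x' t) (y' t) (z' t))) /\
    (forall t, t < Tm -> x' t = x t /\ y' t = y t /\ z' t = z t).
Proof.
  intros Hn HTm HM Hd Hb.
  set (R0 := M + 1).
  assert (HR0 : 0 <= R0) by (unfold R0; lra).
  assert (HNn := INR_n_pos n Hn).
  set (K := (INR n + 1) * R0 * R0).
  set (L := 2 * (INR n + 1) * R0).
  assert (HL : 0 < L) by (unfold L, R0; apply Rmult_lt_0_compat; lra).
  assert (HK : 0 <= K) by (unfold K; apply Rmult_le_pos; [apply Rmult_le_pos|]; lra).
  set (dl := Rmin Tm (/ (6 * L))).
  assert (Hdl0 : 0 < dl) by (unfold dl; apply Rmin_pos; auto; apply Rinv_0_lt_compat; lra).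
  assert (Hdl1 : dl <= Tm) by apply Rmin_l.
  assert (Hdl2 : dl <= / (6 * L)) by apply Rmin_r.
  set (a := Tm - dl / 2). set (b := a + dl).
  assert (Hsmall : 3 * L * (b - a) <= / 2).
  { unfold b. replace (a + dl - a) with dl by ring.
    apply Rmult_le_compat_l with (r := 6 * L) in Hdl2; [|lra].
    rewrite Rinv_r in Hdl2 by lra. lra. }
  set (X := fun i : nat => match i with 0%nat => x | 1%nat => y | _ => z end).
  assert (Hab : a < b) by (unfold b; lra).
  destruct (picard (Fcl n R0) K L a b (fun i => X i a) HK (Rlt_le _ _ HL) Hab Hsmall
    (Fcl_bound n R0 Hn HR0) (Fcl_lip n R0 Hn HR0)) as [phi [Hpa [Hpc Hpd]]].
  assert (HXd : forall i t, 0 < t < Tm -> is_derive (X i) t (fi n i (X 0%nat t) (X 1%nat t) (X 2%nat t))).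
  { intros i t Ht. destruct (Hd t Ht) as [A1 [A2 A3]]. destruct i as [|[|i]]; simpl; auto. }
  assert (HXb : forall j t, Tm / 2 <= t < Tm -> Rabs (X j t) <= R0).
  { intros j t Ht. destruct (Hb t Ht) as [A1 [A2 A3]]. unfold R0. destruct j as [|[|j]]; simpl; lra. }
  assert (Hun : forall t, a <= t < Tm -> phi 0%nat t = X 0%nat t /\ phi 1%nat t = X 1%nat t /\ phi 2%nat t = X 2%nat t).
  { apply (uniq (Fcl n R0) L a Tm phi X). lra. apply Fcl_lip; auto. unfold a; lra.
    - intros i t Ht. split. apply Hpc. eapply deriv_cont. apply HXd. unfold a in *; lra.
    - intros i t Ht. split. apply Hpd. unfold b, a in *; lra.
      assert (Ht' : Tm / 2 <= t < Tm) by (unfold a in *; lra).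
      rewrite Fcl_fi. rewrite (cl_id R0 (X 0%nat t)), (cl_id R0 (X 1%nat t)), (cl_id R0 (X 2%nat t)) by (apply HXb; exact Ht').
      apply HXd. lra.
    - intros i; rewrite Hpa; reflexivity. }
  assert (HbT : forall j, (j <= 2)%nat -> Rabs (phi j Tm) <= M).
  { intros j Hj. destruct (Rle_or_lt (Rabs (phi j Tm)) M) as [|Hgt]; auto. exfalso.
    destruct (cont_eps _ _ (Hpc j Tm) (Rabs (phi j Tm) - M) ltac:(lra)) as [d [Hd0 Hd1]].
    set (t := Rmax a (Tm - d / 2)).
    assert (Ht1 : a <= t) by apply Rmax_l.
    assert (Ht2 : Tm - d / 2 <= t) by apply Rmax_r.
    assert (Ht3 : t < Tm) by (unfold t; apply Rmax_lub_lt; unfold a; lra).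
    assert (Ht4 : Rabs (t - Tm) < d) by (rewrite Rabs_left by lra; lra).
    specialize (Hd1 t Ht4).
    assert (HX : Rabs (phi j t) <= M).
    { destruct (Hun t (conj Ht1 Ht3)) as [A1 [A2 A3]].
      destruct (Hb t ltac:(unfold a in *; lra)) as [B1 [B2 B3]].
      destruct j as [|[|[|j]]]; simpl in *; [rewrite A1|rewrite A2|rewrite A3|lia]; auto. }
    assert (Rabs (phi j Tm) <= Rabs (phi j t) + Rabs (phi j t - phi j Tm)).
    { replace (phi j Tm) with (phi j t + - (phi j t - phi j Tm)) at 1 by ring.
      eapply Rle_trans. apply Rabs_triang. rewrite Rabs_Ropp. lra. }
    lra. }
  assert (Hnear : exists h, 0 < h /\ h <= dl / 2 /\ forall j t, (j <= 2)%nat -> Rabs (t - Tm) < h -> Rabs (phi j t) <= R0).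
  { destruct (cont_eps _ _ (Hpc 0%nat Tm) 1 Rlt_0_1) as [d0 [Hd0 H0]].
    destruct (cont_eps _ _ (Hpc 1%nat Tm) 1 Rlt_0_1) as [d1 [Hd1 H1]].
    destruct (cont_eps _ _ (Hpc 2%nat Tm) 1 Rlt_0_1) as [d2 [Hd2 H2]].
    exists (Rmin (Rmin d0 d1) (Rmin d2 (dl / 2))).
    assert (E1 := Rmin_l (Rmin d0 d1) (Rmin d2 (dl / 2))).
    assert (E2 := Rmin_r (Rmin d0 d1) (Rmin d2 (dl / 2))).
    assert (E3 := Rmin_l d0 d1). assert (E4 := Rmin_r d0 d1).
    assert (E5 := Rmin_l d2 (dl/2)). assert (E6 := Rmin_r d2 (dl/2)).
    split. repeat apply Rmin_pos; lra. split. lra.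
    intros j t Hj Ht.
    assert (P : forall f, Rabs (f Tm) <= M -> Rabs (f t - f Tm) < 1 -> Rabs (f t) <= R0).
    { intros f F1 F2. replace (f t) with (f Tm + (f t - f Tm)) by ring.
      eapply Rle_trans. apply Rabs_triang. unfold R0; lra. }
    destruct j as [|[|[|j]]]; [| | |lia]; apply P; try (apply HbT; lia).
    apply H0; lra. apply H1; lra. apply H2; lra. }
  destruct Hnear as [h [Hh0 [Hh1 Hh2]]].
  set (Y := fun (i : nat) t => if Rlt_dec t Tm then X i t else phi i t).
  assert (HY1 : forall i t, t < Tm -> Y i t = X i t).
  { intros i t Ht. unfold Y. destruct (Rlt_dec t Tm); auto; lra. }
  assert (HY2 : forall i t, (i <= 2)%nat -> a < t -> Y i t = phi i t).
  { intros i t Hi Ht. unfold Y. destruct (Rlt_dec t Tm) as [Hlt|]; auto.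
    destruct (Hun t ltac:(lra)) as [A1 [A2 A3]].
    destruct i as [|[|[|i]]]; simpl; [rewrite A1|rewrite A2|rewrite A3|lia]; auto. }
  assert (HYd : forall i t, (i <= 2)%nat -> 0 < t < Tm + h ->
     is_derive (Y i) t (fi n i (Y 0%nat t) (Y 1%nat t) (Y 2%nat t))).
  { intros i t Hi Ht. destruct (Rlt_or_le t Tm) as [Hlt|Hge].
    - rewrite !HY1 by auto. apply is_derive_ext_loc with (f := X i).
      + apply locally_interval with (a := m_infty) (b := Finite Tm); simpl; auto.
        intros s _ Hs. rewrite HY1; auto.
      + apply HXd. lra.
    - assert (Hat : a < t) by (unfold a; lra).
      rewrite !HY2 by (auto; lia).
      apply is_derive_ext_loc with (f := phi i).
      + apply locally_interval with (a := Finite a) (b := p_infty); simpl; auto.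
        intros s Hs _. rewrite HY2; auto.
      + assert (Htm : Rabs (t - Tm) < h) by (rewrite Rabs_pos_eq; lra).
        assert (Heq : fi n i (phi 0%nat t) (phi 1%nat t) (phi 2%nat t) = Fcl n R0 i (phi 0%nat t) (phi 1%nat t) (phi 2%nat t)).
        { rewrite Fcl_fi. rewrite (cl_id R0 (phi 0%nat t)), (cl_id R0 (phi 1%nat t)), (cl_id R0 (phi 2%nat t)); auto;
          apply Hh2; auto; lia. }
        rewrite Heq. apply Hpd. unfold b, a in *; lra. }
  exists h. split; auto. exists (Y 0%nat), (Y 1%nat), (Y 2%nat). split.
  - intros t Ht. split; [|split].
    + exact (HYd 0%nat t ltac:(lia) Ht).
    + exact (HYd 1%nat t ltac:(lia) Ht).
    + exact (HYd 2%nat t ltac:(lia) Ht).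
  - intros t Ht. rewrite !HY1 by auto. simpl. auto.
Qed.

Lemma mono_up f df s t : s < t ->
  (forall r, s < r < t -> is_derive f r (df r)) ->
  (forall r, s <= r <= t -> continuity_pt f r) ->
  (forall r, s < r < t -> 0 <= df r) -> f s <= f t.
Proof.
  intros Hst Hd Hc Hp.
  assert (H := mvt_up (fun r => - f r) (fun r => - df r) s t 0 Hst).
  assert (- f t - - f s <= 0 * (t - s)).
  { apply H.
    - intros r Hr. apply (is_derive_opp (K:=R_AbsRing) (V:=R_NormedModule) f r (df r)). auto.
    - intros r Hr. apply continuity_pt_opp. auto.
    - intros r Hr. generalize (Hp r Hr). lra. }
  lra.
Qed.

Lemma invariance (n : nat) (y0 z0 : R) (T : Rbar) (x y z : R -> R) :
  (2 <= n)%nat -> inD n y0 z0 -> x 0 = 1 -> y 0 = y0 -> z 0 = z0 ->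
  is_sol n T x y z ->
  forall t, 0 <= t -> Rbar_lt t T -> pos3 (fun s => x s - y s) (fun s => x s - z s) (fun s => x s + z s) t.
Proof.
  intros Hn [Hy0p [Hz0p [HD Hy01]]] Hx0 Hy0 Hz0 [Hd [Lx [Ly Lz]]].
  set (N := INR n) in *.
  assert (HN : 2 <= N) by (unfold N; apply (le_INR 2 n) in Hn; simpl in Hn; lra).
  assert (Hz01 : z0 < 1).
  { assert (Hp : 0 < z0 ^ 2 + N) by (simpl; nra).
    assert (HD' : z0 ^ 2 * (N + 1) <= y0 * (z0 ^ 2 + N)).
    { apply Rmult_le_compat_r with (r := z0 ^ 2 + N) in HD; [|lra].
      unfold Rdiv in HD. rewrite Rmult_assoc, Rinv_l, Rmult_1_r in HD by lra. exact HD. }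
    assert (y0 * (z0 ^ 2 + N) < z0 ^ 2 + N) by nra.
    assert (N * (z0 ^ 2) < N * 1) by nra.
    assert (z0 ^ 2 < 1) by (apply Rmult_lt_reg_l with N; lra).
    simpl in *. nra. }
  set (a := fun s => x s - y s). set (b := fun s => x s - z s). set (c := fun s => x s + z s).
  assert (Hlt : forall s t, s <= t -> Rbar_lt t T -> Rbar_lt s T).
  { intros s t Hst HtT. apply Rbar_le_lt_trans with t; simpl; auto. }
  assert (Hcont : forall t, 0 < t -> Rbar_lt t T -> continuity_pt a t /\ continuity_pt b t /\ continuity_pt c t
     /\ continuity_pt x t).
  { intros t Ht HtT. destruct (Hd t Ht HtT) as [D1 [D2 D3]].
    apply deriv_cont in D1. apply deriv_cont in D2. apply deriv_cont in D3.
    split; [|split; [|split]]; auto; [apply c_minus|apply c_minus|apply c_plus]; auto. }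
  assert (Hstart : exists d, 0 < d /\ forall s, 0 <= s < d -> pos3 a b c s).
  { set (m := Rmin (1 - y0) (Rmin (1 - z0) (1 + z0)) / 3).
    assert (0 < Rmin (1 - y0) (Rmin (1 - z0) (1 + z0))) by (repeat apply Rmin_pos; lra).
    assert (Hm0 : 0 < m) by (unfold m; lra).
    assert (Hm1 : 3 * m <= 1 - y0) by (unfold m; generalize (Rmin_l (1 - y0) (Rmin (1 - z0) (1 + z0))); lra).
    assert (Hm2 : 3 * m <= 1 - z0) by (unfold m; generalize (Rmin_r (1 - y0) (Rmin (1 - z0) (1 + z0)))
       (Rmin_l (1 - z0) (1 + z0)); lra).
    assert (Hm3 : 3 * m <= 1 + z0) by (unfold m; generalize (Rmin_r (1 - y0) (Rmin (1 - z0) (1 + z0)))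
       (Rmin_r (1 - z0) (1 + z0)); lra).
    destruct (right_eps x (x 0) Lx m Hm0) as [d1 [Hd1 E1]].
    destruct (right_eps y (y 0) Ly m Hm0) as [d2 [Hd2 E2]].
    destruct (right_eps z (z 0) Lz m Hm0) as [d3 [Hd3 E3]].
    exists (Rmin d1 (Rmin d2 d3)). split. repeat apply Rmin_pos; auto.
    intros s [Hs0 Hs1].
    destruct (Req_dec s 0) as [->|Hne].
    { unfold pos3, a, b, c. rewrite Hx0, Hy0, Hz0. lra. }
    assert (s < d1) by (eapply Rlt_le_trans; [exact Hs1|apply Rmin_l]).
    assert (s < d2) by (eapply Rlt_le_trans; [exact Hs1|eapply Rle_trans; [apply Rmin_r|apply Rmin_l]]).
    assert (s < d3) by (eapply Rlt_le_trans; [exact Hs1|eapply Rle_trans; [apply Rmin_r|apply Rmin_r]]).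
    specialize (E1 s ltac:(lra)). specialize (E2 s ltac:(lra)). specialize (E3 s ltac:(lra)).
    rewrite Hx0 in E1. rewrite Hy0 in E2. rewrite Hz0 in E3.
    apply Rabs_def2 in E1. apply Rabs_def2 in E2. apply Rabs_def2 in E3.
    unfold pos3, a, b, c. lra. }
  intros t Ht0 HtT.
  destruct (Req_dec t 0) as [->|Htne].
  { destruct Hstart as [d [Hd0 Hd1]]. apply Hd1. lra. }
  destruct (Classical_Prop.classic (pos3 a b c t)) as [|Hnp]; auto.
  exfalso.
  destruct (first_zero a b c t ltac:(lra)) as [ts [[Hts0 Htst] [Hbef [Ha0 [Hb0 [Hc0 Hzero]]]]]]; auto.
  { intros s Hs. destruct (Hcont s ltac:(lra) (Hlt s t ltac:(lra) HtT)) as [A1 [A2 [A3 _]]]; auto. }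
  assert (HtsT : Rbar_lt ts T) by (apply Hlt with t; auto).
  assert (Hh : 0 <= ts / 2 < ts) by lra.
  destruct (Hbef (ts / 2) Hh) as [Pa [Pb Pc]].
  assert (Hint : forall r, ts / 2 <= r <= ts -> 0 < r /\ Rbar_lt r T) by (intros r Hr; split; [lra|apply Hlt with ts; auto; lra]).
  assert (Hge : forall r, ts / 2 <= r <= ts -> 0 <= b r /\ 0 <= c r).
  { intros r Hr. destruct (Req_dec r ts) as [->|]; auto. destruct (Hbef r ltac:(lra)) as [_ [? ?]]; lra. }
  assert (Hxts : x (ts / 2) <= x ts).
  { apply mono_up with (df := fun r => fx n (x r) (y r) (z r)). lra.
    - intros r Hr. destruct (Hint r ltac:(lra)). apply Hd; auto.
    - intros r Hr. destruct (Hint r Hr). apply Hcont; auto.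
    - intros r Hr. unfold fx. fold N. simpl. nra. }
  assert (Hxpos : 0 < x ts) by (unfold b, c in Pb, Pc; lra).
  assert (Hats : a (ts / 2) <= a ts).
  { apply mono_up with (df := fun r => fx n (x r) (y r) (z r) - fy n (x r) (y r) (z r)). lra.
    - intros r Hr. destruct (Hint r ltac:(lra)) as [Hr0 HrT]. destruct (Hd r Hr0 HrT) as [D1 [D2 D3]].
      unfold a. apply d_minus; auto.
    - intros r Hr. destruct (Hint r Hr). apply Hcont; auto.
    - intros r Hr. destruct (Hge r ltac:(lra)) as [G1 G2]. unfold b, c in G1, G2.
      unfold fx, fy. fold N.
      replace (N * x r ^ 2 + z r ^ 2 - (N + 1) * z r ^ 2) with (N * ((x r - z r) * (x r + z r))) by ring.
      apply Rmult_le_pos; [lra|]. apply Rmult_le_pos; lra. }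
  assert (Hapos : 0 < a ts) by lra.
  destruct (Hd ts Hts0 HtsT) as [D1 [D2 D3]].
  assert (Hcontra : forall f df, is_derive f ts df -> 0 < df -> f ts = 0 -> (forall s, 0 <= s < ts -> 0 < f s) -> False).
  { intros f df Hf Hdf Hf0 Hfp. destruct (deriv_pos_left f ts df Hf Hdf) as [eta [Heta Heta1]].
    set (s := Rmax (ts - eta / 2) (ts / 2)).
    assert (S1 : ts - eta / 2 <= s) by apply Rmax_l.
    assert (S2 : ts / 2 <= s) by apply Rmax_r.
    assert (S3 : s < ts) by (unfold s; apply Rmax_lub_lt; lra).
    specialize (Heta1 s ltac:(lra)). specialize (Hfp s ltac:(lra)). lra. }
  assert (HNp : 0 < (N + 1) / N) by (apply Rdiv_lt_0_compat; lra).
  destruct Hzero as [Ha|[Hb|Hc]].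
  - lra.
  - apply (Hcontra b (fx n (x ts) (y ts) (z ts) - fz n (x ts) (y ts) (z ts))).
    + unfold b. apply d_minus; auto.
    + assert (Hz : z ts = x ts) by (unfold b in Hb; lra). rewrite Hz.
      unfold fx, fz. fold N.
      replace (N * x ts ^ 2 + x ts ^ 2 - (N + 1) / N * x ts * ((N - 1) * x ts + y ts))
        with ((N + 1) / N * x ts * (x ts - y ts)) by (field; lra).
      unfold a in Hapos. apply Rmult_lt_0_compat; [apply Rmult_lt_0_compat|]; lra.
    + exact Hb.
    + intros s Hs. apply Hbef; auto.
  - apply (Hcontra c (fx n (x ts) (y ts) (z ts) + fz n (x ts) (y ts) (z ts))).
    + unfold c. apply d_plus; auto.
    + assert (Hz : z ts = - x ts) by (unfold c in Hc; lra). rewrite Hz.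
      unfold fx, fz. fold N.
      replace (N * x ts ^ 2 + (- x ts) ^ 2 + (N + 1) / N * (- x ts) * ((N - 1) * x ts + y ts))
        with ((N + 1) / N * x ts * (x ts - y ts)) by (field; lra).
      unfold a in Hapos. apply Rmult_lt_0_compat; [apply Rmult_lt_0_compat|]; lra.
    + exact Hc.
    + intros s Hs. apply Hbef; auto.
Qed.

Theorem lemma3p7 (n : nat) (y0 z0 : R) (T : Rbar) (x y z : R -> R) :
  (2 <= n)%nat ->
  inD n y0 z0 ->
  x 0 = 1 -> y 0 = y0 -> z 0 = z0 ->
  is_maximal_sol n T x y z ->
  (forall t, 0 <= t -> Rbar_lt t T -> y t < x t /\ z t < x t) /\
  exists Tmax : R, T = Finite Tmax /\
    exists C : R, 0 < C /\
      forall t, 0 <= t < Tmax ->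
        1 / (C * (Tmax - t)) < x t /\ x t < C / (Tmax - t).
Proof.
  intros Hn HinD Hx0 Hy0 Hz0 [HT0 [Hsol Hext]].
  assert (Hinv := invariance n y0 z0 T x y z Hn HinD Hx0 Hy0 Hz0 Hsol).
  assert (Hyz : forall t, 0 <= t -> Rbar_lt t T -> y t < x t /\ z t < x t /\ - x t < z t).
  { intros t Ht HtT. destruct (Hinv t Ht HtT) as [A1 [A2 A3]]. lra. }
  split. { intros t Ht HtT. destruct (Hyz t Ht HtT) as [A1 [A2 A3]]. auto. }
  set (N := INR n).
  assert (HN : 2 <= N) by (unfold N; apply (le_INR 2 n) in Hn; simpl in Hn; lra).
  destruct Hsol as [Hd [Lx [Ly Lz]]].
  assert (Hlt : forall s t, s <= t -> Rbar_lt t T -> Rbar_lt s T).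
  { intros s t Hst HtT. apply Rbar_le_lt_trans with t; simpl; auto. }
  set (g := fun t => / x t).
  assert (Hxp : forall t, 0 <= t -> Rbar_lt t T -> 0 < x t).
  { intros t Ht HtT. destruct (Hyz t Ht HtT) as [A1 [A2 A3]]. lra. }
  assert (Hgp : forall t, 0 <= t -> Rbar_lt t T -> 0 < g t).
  { intros t Ht HtT. unfold g. apply Rinv_0_lt_compat. auto. }
  assert (Hgd : forall t, 0 < t -> Rbar_lt t T -> is_derive g t (- fx n (x t) (y t) (z t) / (x t) ^ 2)).
  { intros t Ht HtT. unfold g. apply d_inv. apply Hd; auto. generalize (Hxp t ltac:(lra) HtT); lra. }
  assert (Hgb : forall t, 0 < t -> Rbar_lt t T ->
     - (N + 1) <= - fx n (x t) (y t) (z t) / (x t) ^ 2 <= - N).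
  { intros t Ht HtT. destruct (Hyz t ltac:(lra) HtT) as [A1 [A2 A3]].
    assert (Hx := Hxp t ltac:(lra) HtT).
    assert (Hz2 : z t ^ 2 <= x t ^ 2) by (simpl; nra).
    assert (Hx2 : 0 < x t ^ 2) by (simpl; nra).
    unfold fx. fold N.
    replace (- (N * x t ^ 2 + z t ^ 2) / x t ^ 2) with (- N - z t ^ 2 / x t ^ 2) by (field; lra).
    assert (0 <= z t ^ 2 / x t ^ 2 <= 1).
    { split. apply Rdiv_le_0_compat. simpl; nra. lra.
      apply Rmult_le_reg_r with (x t ^ 2). lra. unfold Rdiv. rewrite Rmult_assoc, Rinv_l by lra. lra. }
    lra. }
  assert (HG : forall s t, 0 < s -> s < t -> Rbar_lt t T ->
     - (N + 1) * (t - s) <= g t - g s <= - N * (t - s)).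
  { intros s t Hs Hst HtT. apply mvt_bound with (df := fun r => - fx n (x r) (y r) (z r) / (x r) ^ 2).
    - lra.
    - intros r Hr. apply Hgd. lra. apply Hlt with t; auto; lra.
    - intros r Hr. eapply deriv_cont. apply Hgd. lra. apply Hlt with t; auto; lra.
    - intros r Hr. apply Hgb. lra. apply Hlt with t; auto; lra. }
  destruct T as [Tm| |]; [| |simpl in HT0; contradiction].
  2:{ exfalso. assert (H1 := Hgp 1 ltac:(lra) I).
      set (t := 2 + g 1 / N).
      assert (1 < t) by (unfold t; assert (0 < g 1 / N) by (apply Rdiv_lt_0_compat; lra); lra).
      destruct (HG 1 t ltac:(lra) ltac:(lra) I) as [_ H2].
      assert (H3 := Hgp t ltac:(lra) I).
      assert (N * (t - 1) = N + g 1) by (unfold t; field; lra). lra. }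
  simpl in HT0.
  assert (HGt : forall s t, 0 < s -> s < t -> t < Tm -> - (N + 1) * (t - s) <= g t - g s <= - N * (t - s)).
  { intros s t Hs Hst HtT. apply HG; auto. }
  assert (Hup : forall t, 0 < t < Tm -> N * (Tm - t) <= g t).
  { intros t Ht. destruct (Rle_or_lt (N * (Tm - t)) (g t)) as [|Hlt']; auto. exfalso.
    assert (Hg := Hgp t ltac:(lra) ltac:(simpl; lra)).
    set (s := t + g t / N).
    assert (Hgs : g t / N * N = g t) by (field; lra).
    assert (0 < g t / N) by (apply Rdiv_lt_0_compat; lra).
    assert (Hs : s < Tm).
    { unfold s. apply Rmult_lt_reg_r with N. lra.
      replace ((t + g t / N) * N) with (t * N + g t) by (rewrite Rmult_plus_distr_r, Hgs; ring). lra. }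
    destruct (HGt t s ltac:(lra) ltac:(unfold s; lra) Hs) as [_ H2].
    assert (Hgs' := Hgp s ltac:(unfold s; lra) ltac:(simpl; lra)).
    assert (N * (s - t) = g t) by (unfold s; field; lra). lra. }
  assert (Hblow : forall eps, 0 < eps -> exists s, 0 < s < Tm /\ g s < eps).
  { intros eps Heps. apply Classical_Prop.NNPP. intros Hno.
    assert (Hge : forall s, 0 < s < Tm -> eps <= g s).
    { intros s Hs. apply Rnot_lt_le. intros Hl. apply Hno. exists s; auto. }
    set (M := Rmax (/ eps) (Rabs (y (Tm / 2)))).
    assert (HM1 : / eps <= M) by apply Rmax_l.
    assert (HM2 : Rabs (y (Tm / 2)) <= M) by apply Rmax_r.
    destruct (extend n Tm M x y z ltac:(lia) HT0) as [h [Hh [x' [y' [z' [Hd' Hag]]]]]].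
    - generalize (Rabs_pos (y (Tm / 2))); lra.
    - intros t Ht. apply Hd; simpl; lra.
    - intros t Ht.
      assert (Hx : 0 < x t) by (apply Hxp; simpl; lra).
      assert (Hxe : x t <= / eps).
      { replace (x t) with (/ g t) by (unfold g; rewrite Rinv_inv; auto).
        apply Rinv_le_contravar; auto. apply Hge; lra. }
      destruct (Hyz t ltac:(lra) ltac:(simpl; lra)) as [A1 [A2 A3]].
      assert (Hy : y (Tm / 2) <= y t).
      { destruct (Req_dec t (Tm / 2)) as [->|Hne]. lra.
        apply mono_up with (df := fun r => fy n (x r) (y r) (z r)). lra.
        - intros r Hr. apply Hd; simpl; lra.
        - intros r Hr. eapply deriv_cont. apply Hd; simpl; lra.
        - intros r Hr. unfold fy. fold N. simpl. nra. }
      apply Rabs_le_between in HM2.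
      split; [|split]; apply Rabs_le; lra.
    - assert (Hsol' : is_sol n (Finite (Tm + h)) x' y' z').
      { split; [|split; [|split]].
        - intros t Ht HtT. apply Hd'. simpl in HtT. lra.
        - destruct (Hag 0 HT0) as [E1 _]. rewrite E1.
          apply filterlim_ext_loc with x; auto.
          exists (mkposreal Tm HT0). intros s Hs Hs0. simpl in Hs.
          unfold ball in Hs; simpl in Hs; unfold AbsRing_ball, abs, minus, plus, opp in Hs; simpl in Hs.
          rewrite Ropp_0, Rplus_0_r, Rabs_pos_eq in Hs by lra.
          destruct (Hag s Hs) as [E2 _]. auto.
        - destruct (Hag 0 HT0) as [_ [E1 _]]. rewrite E1.
          apply filterlim_ext_loc with y; auto.
          exists (mkposreal Tm HT0). intros s Hs Hs0. simpl in Hs.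
          unfold ball in Hs; simpl in Hs; unfold AbsRing_ball, abs, minus, plus, opp in Hs; simpl in Hs.
          rewrite Ropp_0, Rplus_0_r, Rabs_pos_eq in Hs by lra.
          destruct (Hag s Hs) as [_ [E2 _]]. auto.
        - destruct (Hag 0 HT0) as [_ [_ E1]]. rewrite E1.
          apply filterlim_ext_loc with z; auto.
          exists (mkposreal Tm HT0). intros s Hs Hs0. simpl in Hs.
          unfold ball in Hs; simpl in Hs; unfold AbsRing_ball, abs, minus, plus, opp in Hs; simpl in Hs.
          rewrite Ropp_0, Rplus_0_r, Rabs_pos_eq in Hs by lra.
          destruct (Hag s Hs) as [_ [_ E2]]. auto. }
      assert (Hle := Hext (Finite (Tm + h)) x' y' z' Hsol').
      assert (Rbar_le (Tm + h) Tm).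
      { apply Hle. intros t Ht HtT. apply Hag. simpl in HtT. lra. }
      simpl in H. lra. }
  assert (Hlow : forall t, 0 < t < Tm -> g t < (N + 2) * (Tm - t)).
  { intros t Ht. destruct (Hblow (Tm - t) ltac:(lra)) as [s [Hs Hgs]].
    destruct (Rtotal_order s t) as [Hst|[Hst|Hst]].
    - destruct (HGt s t ltac:(lra) Hst ltac:(lra)) as [_ H2]. nra.
    - subst s. nra.
    - destruct (HGt t s ltac:(lra) Hst ltac:(lra)) as [H1 _]. nra. }
  assert (Hxg : forall t, 0 <= t < Tm -> x t = / g t).
  { intros t Ht. unfold g. rewrite Rinv_inv. auto. }
  exists Tm. split; auto. exists (2 * N + 4). split. lra.
  assert (Hmain : forall t, 0 < t < Tm -> 1 / ((2 * N + 4) * (Tm - t)) < x t /\ x t < (2 * N + 4) / (Tm - t)).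
  { intros t Ht. rewrite (Hxg t ltac:(lra)).
    assert (Hg := Hgp t ltac:(lra) ltac:(simpl; lra)).
    assert (H1 := Hup t Ht). assert (H2 := Hlow t Ht). split.
    - unfold Rdiv. rewrite Rmult_1_l. apply Rinv_lt_contravar. apply Rmult_lt_0_compat; auto.
      apply Rmult_lt_0_compat; lra. nra.
    - apply Rle_lt_trans with (/ (N * (Tm - t))).
      apply Rinv_le_contravar; auto. apply Rmult_lt_0_compat; lra.
      rewrite Rinv_mult. unfold Rdiv. apply Rmult_lt_compat_r. apply Rinv_0_lt_compat; lra.
      assert (/ N <= / 2) by (apply Rinv_le_contravar; lra). lra. }
  intros t Ht. destruct (Req_dec t 0) as [->|Hne]; [|apply Hmain; lra].
  rewrite Hx0. rewrite !Rminus_0_r.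
  destruct (right_eps x (x 0) Lx (1/2) ltac:(lra)) as [d [Hd0 Hd1]].
  set (s := Rmin d Tm / 2).
  assert (0 < Rmin d Tm) by (apply Rmin_pos; lra).
  assert (Rmin d Tm <= d) by apply Rmin_l. assert (Rmin d Tm <= Tm) by apply Rmin_r.
  assert (Hs : 0 < s < Tm) by (unfold s; lra).
  specialize (Hd1 s ltac:(unfold s; lra)). rewrite Hx0 in Hd1. apply Rabs_def2 in Hd1.
  assert (Hgs : g s < 2 /\ 2 / 3 < g s).
  { assert (0 < g s) by (apply Hgp; simpl; lra).
    assert (Hxs : 0 < x s) by (apply Hxp; simpl; lra).
    assert (Hp : g s * x s = 1) by (unfold g; apply Rinv_l; lra).
    split; nra. }
  assert (Hu1 := Hup s Hs). assert (Hu2 := Hlow s Hs).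
  split.
  - unfold Rdiv. rewrite Rmult_1_l.
    assert (Hc : 1 < (2 * N + 4) * Tm) by nra.
    apply Rmult_lt_reg_r with ((2 * N + 4) * Tm). lra.
    rewrite Rinv_l by lra. lra.
  - assert (Hs2 : s <= Tm / 2) by (unfold s; lra).
    assert (Hq : N * (Tm / 2) <= N * (Tm - s)) by (apply Rmult_le_compat_l; lra).
    assert (HT2 : Tm < 2) by nra.
    apply Rmult_lt_reg_r with Tm. lra. unfold Rdiv. rewrite Rmult_assoc, Rinv_l by lra. lra.
Qed.
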